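(* Let $G'$ be a context-free grammar with start symbol $s$, no $\varepsilon$-rules and no useless nonterminal, let $\ell$ be a prefix of $G'$, and let $\mathrm{Expl}(G_\ell)$ be its explanation graph (defined in the context). Then $\mathrm{Expl}(G_\ell)$ is linear.
   Context: Grammar: $G'$ has finite terminal set $\Sigma$, finite nonterminal set $N$, start symbol $s\in N$; every rule $A\to\alpha$ has $\alpha\in(N\cup\Sigma)^+$; no nonterminal is useless (each has a rule occurring in some derivation of a terminal string from $s$). A prefix is a nonempty string $\ell\in\Sigma^+$ that is an initial segment of some terminal string derivable from $s$. Explanation graph. For a prefix $\ell$ consider ground atoms $q(\ell)$, $p(\beta,u,v)$ with $\beta\in(N\cup\Sigma)^*$, $u,v\in\Sigma^*$, and switch atoms $m(A\to\alpha)$ for rules of $G'$. Consider all ground clauses: (C0) $q(\ell)\leftarrow p(s,\ell,\varepsilon)$; (C1) $p(\varepsilon,u,u)\leftarrow$ (empty body), for all $u$; (C2) for $a\in\Sigma$: $p(a\beta,a,\varepsilon)\leftarrow$ (empty body); and $p(a\beta,av,w)\leftarrow p(\beta,v,w)$ whenever $v\neq\varepsilon$; (C3) for $A\in N$ and each rule $A\to\alpha$: $p(A\beta,u,\varepsilon)\leftarrow m(A\to\alpha)\wedge p(\alpha,u,\varepsilon)$; and $p(A\beta,u,w)\leftarrow m(A\to\alpha)\wedge p(\alpha,u,v)\wedge p(\beta,v,w)$ whenever $v\neq\varepsilon$. A $p$- or $q$-atom is provable if it lies in the least Herbrand model of these clauses with all $m$-atoms taken as true. The defined goals of $\mathrm{Expl}(G_\ell)$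 form the smallest set containing $q(\ell)$ such that whenever $H$ is a defined goal and $H\leftarrow\alpha$ is one of the clauses above whose $p$-atoms are all provable, every $p$-atom of $\alpha$ is a defined goal. The defining formula of a defined goal $H$ is $H\Leftrightarrow\alpha_1\vee\dots\vee\alpha_M$, where the $\alpha_i$ are the bodies of all such clauses with head $H$ whose $p$-atoms are all provable. $H$ is a parent of $C$ if $C$ occurs in some $\alpha_i$; the ancestor relation is the transitive closure of the parent relation. Two defined goals $A,B$ are equivalent if $A=B$ or each is an ancestor of the other; the equivalence classes are called SCCs. A defining formula $H\Leftrightarrow\alpha_1\vee\dots\vee\alpha_M$ is linear if no $\alpha_i$ contains two (occurrences of) defined goals belonging to the same SCC; $\mathrm{Expl}(G_\ell)$ is linear if every defining formula in it is linear. *)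

(* Defs.v *)
From mathcomp Require Import all_boot.
From Stdlib Require Import List Relation_Operators.
Set Implicit Arguments. Unset Strict Implicit. Unset Printing Implicit Defensive.

Section Grammar.
Variables (Sigma Nt : finType).

Definition symb : Type := (Sigma + Nt)%type.
Definition term (a : Sigma) : symb := inl a.
Definition nterm (A : Nt) : symb := inr A.

Variable rules : list (Nt * list symb).

Definition step_with (A : Nt) (alpha : list symb) (x y : list symb) : Prop :=
  exists l r, x = l ++ nterm A :: r /\ y = l ++ alpha ++ r.

Definition step (x y : list symb) : Prop :=
  exists A alpha, List.In (A, alpha) rules /\ step_with A alpha x y.

Definition derives : list symb -> list symb -> Prop := clos_refl_trans _ step.

Definition no_eps_rules : Prop :=
  forall A alpha, List.In (A, alpha) rules -> alpha <> nil.

Definition no_useless (s : Nt) : Prop :=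
  forall A : Nt, exists alpha x y (w : list Sigma),
    List.In (A, alpha) rules /\
    derives [:: nterm s] x /\ step_with A alpha x y /\ derives y (map term w).

Definition is_prefix (s : Nt) (l : list Sigma) : Prop :=
  l <> nil /\ exists w : list Sigma, derives [:: nterm s] (map term (l ++ w)).

Inductive atom : Type :=
| Q of list Sigma
| P of list symb & list Sigma & list Sigma
| M of Nt & list symb.

Definition is_p (a : atom) : Prop := match a with P _ _ _ => True | _ => False end.

(* all ground clauses (C0)-(C3) for start symbol s and prefix l: head <- body *)
Variables (s : Nt) (l : list Sigma).

Inductive clause : atom -> list atom -> Prop :=
| C0 : clause (Q l) [:: P [:: nterm s] l nil]
| C1 u : clause (P nil u u) nil
| C2a a beta : clause (P (term a :: beta) [:: a] nil) nil
| C2b a beta v w : v <> nil ->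
    clause (P (term a :: beta) (a :: v) w) [:: P beta v w]
| C3a A alpha beta u : List.In (A, alpha) rules ->
    clause (P (nterm A :: beta) u nil) [:: M A alpha; P alpha u nil]
| C3b A alpha beta u v w : List.In (A, alpha) rules -> v <> nil ->
    clause (P (nterm A :: beta) u w) [:: M A alpha; P alpha u v; P beta v w].

(* least Herbrand model with all m-atoms true *)
Inductive provable : atom -> Prop :=
| prov_m A alpha : provable (M A alpha)
| prov_cl H body : clause H body ->
    (forall b, List.In b body -> provable b) -> provable H.

Definition body_ok (body : list atom) : Prop :=
  forall b, List.In b body -> is_p b -> provable b.

Inductive defined : atom -> Prop :=
| def_q : defined (Q l)
| def_step H body b : defined H -> clause H body -> body_ok body ->
    List.In b body -> is_p b -> defined b.

(* H is a parent of C: C occurs in a disjunct of the defining formula of H *)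
Definition parent (H C : atom) : Prop :=
  defined H /\ exists body, clause H body /\ body_ok body /\ List.In C body.

Definition ancestor : atom -> atom -> Prop := clos_trans _ parent.

Definition equiv_goal (A B : atom) : Prop :=
  A = B \/ (ancestor A B /\ ancestor B A).

Definition linear_def (H : atom) : Prop :=
  forall body, clause H body -> body_ok body ->
    ~ (exists i j a b, i <> j /\ nth_error body i = Some a /\
         nth_error body j = Some b /\ defined a /\ defined b /\ equiv_goal a b).

Definition expl_linear : Prop := forall H, defined H -> linear_def H.
End Grammar.

(* Main.v *)
Require Import Defs.
From mathcomp Require Import all_boot.
From Stdlib Require Import List Relation_Operators Lia.
From mathcomp Require Import zify.

Section S.
Variables (Sigma Nt : finType) (rules : list (Nt * list (symb Sigma Nt))) (s : Nt) (l : list Sigma).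

Definition inv (a : atom Sigma Nt) : Prop :=
  match a with
  | P al u w => length w <= length u /\ (al <> nil -> length w < length u)
  | _ => True
  end.

Lemma prov_inv : no_eps_rules rules -> forall a, provable rules s l a -> inv a.
Proof.
move=> Hne a Hp; induction Hp as [A alpha|Hd body Hc _ IH]; first exact I.
destruct Hc; simpl.
- exact I.
- split; [lia| congruence].
- simpl; split; lia.
- have := IH _ (or_introl erefl); simpl.
  destruct v; [congruence|]; simpl; lia.
- have := IH _ (or_intror (or_introl erefl)); simpl => [[_ H2]].
  have := H2 (Hne _ _ H). simpl; lia.
- have := IH _ (or_intror (or_introl erefl)); simpl => [[_ H2]].
  have := H2 (Hne _ _ H).
  have := IH _ (or_intror (or_intror (or_introl erefl))); simpl.
  lia.
Qed.

Definition meas (a : atom Sigma Nt) : nat :=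
  match a with P _ u _ => length u | Q u => length u | M _ _ => 0 end.

Lemma parent_meas : no_eps_rules rules -> forall H C,
  parent rules s l H C -> meas C <= meas H.
Proof.
move=> Hne H C [_ [body [Hc [Hok Hin]]]].
destruct Hc; simpl in Hin.
- destruct Hin as [<-|[]]; simpl; lia.
- destruct Hin.
- destruct Hin.
- destruct Hin as [<-|[]]; simpl; destruct v; [congruence|simpl; lia].
- destruct Hin as [<-|[<-|[]]]; simpl; lia.
- destruct Hin as [<-|[<-|[<-|[]]]]; simpl; try lia.
  have := prov_inv Hne _ (Hok _ (or_intror (or_introl erefl)) I); simpl; lia.
Qed.

Lemma anc_meas : no_eps_rules rules -> forall H C,
  ancestor rules s l H C -> meas C <= meas H.
Proof.
move=> Hne H C Ha; induction Ha.
- exact: parent_meas.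
- lia.
Qed.

Lemma defined_notM : forall a, defined rules s l a -> ~ (exists A al, a = M A al).
Proof.
move=> a Hd; destruct Hd as [|Hh body b _ _ _ _ Hp].
- by move=> [? [? ?]].
- move=> [A [al E]]; subst; exact Hp.
Qed.

End S.

Theorem theorem3 (Sigma Nt : finType) (rules : list (Nt * list (symb Sigma Nt)))
  (s : Nt) (l : list Sigma) :
  no_eps_rules rules -> no_useless rules s -> is_prefix rules s l ->
  expl_linear rules s l.
Proof.
move=> Hne _ _ H _ body Hc Hok [i [j [a [b [Hij [Ha [Hb [Da [Db Heq]]]]]]]]].
have key : forall al u v beta w, List.In (P al u v) body -> al <> nil ->
   provable rules s l (P al u v) -> List.In (P beta v w) body ->
   ~ equiv_goal rules s l (P al u v) (P beta v w).
{ move=> al u v beta w _ Hal Hp _ [E|[_ H2]].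
  - injection E => E1 E2 E3; subst.
    have := @prov_inv _ _ _ _ _ Hne _ Hp; simpl => [[_ H3]]; have := H3 Hal; lia.
  - have := @anc_meas _ _ _ _ _ Hne _ _ H2; simpl.
    have := @prov_inv _ _ _ _ _ Hne _ Hp; simpl => [[_ H3]]; have := H3 Hal; lia. }
destruct Hc.
- destruct i as [|[|i]]; destruct j as [|[|j]]; simpl in *; rewrite ?nth_error_nil in Ha Hb; try discriminate; lia.
- destruct i; discriminate.
- destruct i; discriminate.
- destruct i as [|[|i]]; destruct j as [|[|j]]; simpl in *; rewrite ?nth_error_nil in Ha Hb; try discriminate; lia.
- destruct i as [|[|i]]; destruct j as [|[|j]]; simpl in *; rewrite ?nth_error_nil in Ha Hb; try discriminate; try lia.
  all: try (injection Ha as <-; apply: (@defined_notM _ _ _ _ _ _ Da); by eauto).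
  all: try (injection Hb as <-; apply: (@defined_notM _ _ _ _ _ _ Db); by eauto).
- destruct i as [|[|[|i]]]; destruct j as [|[|[|j]]]; simpl in *; rewrite ?nth_error_nil in Ha Hb; try discriminate; try lia.
  all: try (injection Ha as <-; apply: (@defined_notM _ _ _ _ _ _ Da); by eauto).
  all: try (injection Hb as <-; apply: (@defined_notM _ _ _ _ _ _ Db); by eauto).
  + injection Ha as <-; injection Hb as <-.
    apply: (key alpha u v beta w); [simpl; tauto | exact: Hne _ _ H | apply: Hok; simpl; tauto | simpl; tauto| exact Heq].
  + injection Ha as <-; injection Hb as <-.
    apply: (key alpha u v beta w); [simpl; tauto | exact: Hne _ _ H | apply: Hok; simpl; tauto | simpl; tauto|].
    by case: Heq => [E|[E1 E2]]; [left | right].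
Qed.
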